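(* Let $R$ be a division ring and let $\{I_{a,b}\}_{a,b\in\mathbb{Z}_{\geq 0}}\subseteq R$ be a family of bimoments such that for every $n\geq 1$ the $n\times n$ matrix $M_n$ with entries $(M_n)_{r,s}=I_{n-r,\,s-1}$ ($1\le r,s\le n$) is invertible. Define $p_0=1$, $q_0=1$, and for $n\geq 1$ $$p_n(x)=x^n-\begin{bmatrix} I_{n,0} & \cdots & I_{n,n-1}\end{bmatrix} M_n^{-1}\begin{bmatrix} x^{n-1}\\ \vdots \\ x\\ 1\end{bmatrix},$$ $$q_n(y)=y^n-\begin{bmatrix} 1 & y & \cdots & y^{n-1}\end{bmatrix} M_n^{-1}\begin{bmatrix} I_{n-1,n}\\ \vdots\\ I_{0,n}\end{bmatrix}.$$ These are the quasideterminants $$p_n=\begin{vmatrix} I_{n,0} & \cdots & I_{n,n-1} & \boxed{x^{n}} \\ \vdots & \ddots & \vdots & \vdots \\ I_{1,0} & \cdots & I_{1,n-1} & x \\ I_{0,0} & \cdots & I_{0,n-1} & 1 \end{vmatrix},\qquad q_n=\begin{vmatrix} 1 & y & \cdots & \boxed{y^{n}} \\ I_{n-1,0} & I_{n-1,1} & \cdots & I_{n-1,n} \\ \vdots & \vdots & \ddots & \vdots \\ I_{0,0} & I_{0,1} & \cdots & I_{0,n} \end{vmatrix}.$$ Then $\{p_n\},\{q_n\}$ is a monic biorthogonal system with respect to $\{I_{a,b}\}$, i.e. $\langle p_n(x),q_m(y)\rangle=0$ for all $n\neq m$.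
   Context: Let $C$ be the center of $R$. Elements of $R[x]$ are written $\sum_i a_i x^i$ and elements of $R[y]$ are written $\sum_j y^j b_j$ with $a_i,b_j\in R$; $x$ and $y$ commute with elements of $C$. Given a family $\{I_{a,b}\}$ in $R$ (the bimoments), the pairing $\langle\cdot,\cdot\rangle:R[x]\times R[y]\to R$ is defined by $\langle \sum_i a_i x^i,\sum_j y^j b_j\rangle=\sum_{i,j} a_i I_{i,j} b_j$, so that $I_{a,b}=\langle x^a,y^b\rangle$. For a square matrix $A=(a_{k,l})$ of size $n+1$, the $(i,j)$-quasideterminant is $|A|_{i,j}=a_{i,j}-r_i\,(A^{i,j})^{-1}c_j$, where $A^{i,j}$ is $A$ with row $i$ and column $j$ removed (assumed invertible), $r_i$ is row $i$ of $A$ with the $j$th entry removed, and $c_j$ is column $j$ of $A$ with the $i$th entry removed; the boxed entry marks the position $(i,j)$. *)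

(* Defs.v *)
From HB Require Import structures.
From mathcomp Require Import all_boot all_order all_algebra.
Set Implicit Arguments. Unset Strict Implicit. Unset Printing Implicit Defensive.
Import GRing.Theory.
Local Open Scope ring_scope.

(* R : a (possibly noncommutative) unit ring; "division ring" is imposed as a
   hypothesis in the theorem.  Polynomials in x
   (resp. y) are elements of {poly R}: p`_i is the left coefficient a_i of x^i,
   q`_j is the right coefficient b_j of y^j. *)

Definition bipair (R : nzRingType) (I : nat -> nat -> R) (p q : {poly R}) : R :=
  \sum_(i < size p) \sum_(j < size q) p`_i * I i j * q`_j.

(* M_n with (M_n)_{r,s} = I_{n-r, s-1} for 1 <= r,s <= n, i.e. 0-based
   (r,s) |-> I_{n-1-r, s}. *)
Definition Mmat (R : nzRingType) (I : nat -> nat -> R) (n : nat) : 'M[R]_n :=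
  \matrix_(r < n, s < n) I (n.-1 - r)%N s.

Definition prow (R : nzRingType) (I : nat -> nat -> R) (n : nat) : 'rV[R]_n :=
  \row_(s < n) I n s.

Definition qcol (R : nzRingType) (I : nat -> nat -> R) (n : nat) : 'cV[R]_n :=
  \col_(r < n) I (n.-1 - r)%N n.

Definition p_poly (R : nzRingType) (I : nat -> nat -> R)
  (Minv : forall n, 'M[R]_n) (n : nat) : {poly R} :=
  if n is 0 then 1 else
  'X^n - \sum_(k < n) ((prow I n *m Minv n) 0 k)%:P * 'X^(n.-1 - k).

Definition q_poly (R : nzRingType) (I : nat -> nat -> R)
  (Minv : forall n, 'M[R]_n) (n : nat) : {poly R} :=
  if n is 0 then 1 else
  'X^n - \sum_(j < n) 'X^j * ((Minv n *m qcol I n) j 0)%:P.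

(* Main.v *)
Require Import Defs.
From HB Require Import structures.
From mathcomp Require Import all_boot all_order all_algebra.
Import GRing.Theory.
Local Open Scope ring_scope.

Section Aux.
Variable R : nzRingType.

Lemma widen_sum (f : nat -> R) s N : (s <= N)%N ->
  (forall i, (s <= i)%N -> f i = 0) ->
  \sum_(i < s) f i = \sum_(i < N) f i.
Proof.
move=> h f0; rewrite -!(big_mkord xpredT) (big_cat_nat (leq0n s) h) /=.
rewrite [X in _ = _ + X]big_nat_cond [X in _ = _ + X]big1 ?addr0 // => i /andP[/andP[hi _] _].
exact: f0.
Qed.

Lemma sum_deltal (F : nat -> R) N a : (a < N)%N ->
  \sum_(i < N) (i == a :> nat)%:R * F i = F a.
Proof.
move=> Ha; rewrite (bigD1 (Ordinal Ha)) //= eqxx mul1r big1 ?addr0 //.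
move=> i hi; suff -> : (i == a :> nat) = false by rewrite mul0r.
by apply/negbTE; apply: contra hi => /eqP h; apply/eqP/val_inj.
Qed.

Lemma sum_deltar (F : nat -> R) N a : (a < N)%N ->
  \sum_(i < N) F i * (i == a :> nat)%:R = F a.
Proof.
move=> Ha; rewrite (bigD1 (Ordinal Ha)) //= eqxx mulr1 big1 ?addr0 //.
move=> i hi; suff -> : (i == a :> nat) = false by rewrite mulr0.
by apply/negbTE; apply: contra hi => /eqP h; apply/eqP/val_inj.
Qed.

Lemma bipair_bound (I : nat -> nat -> R) (p q : {poly R}) N K :
  (size p <= N)%N -> (size q <= K)%N ->
  bipair I p q = \sum_(i < N) \sum_(j < K) p`_i * I i j * q`_j.
Proof.
move=> hp hq; rewrite /bipair.
rewrite (widen_sum (fun i => \sum_(j < size q) p`_i * I i j * q`_j) _ _ hp).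
  apply: eq_bigr => i _.
  apply: (widen_sum (fun j => p`_i * I i j * q`_j) _ _ hq).
  by move=> j hj /=; rewrite [q`_j]nth_default // mulr0.
by move=> i hi /=; rewrite big1 // => j _; rewrite [p`_i]nth_default // !mul0r.
Qed.
End Aux.

Section Main.
Variable R : unitRingType.
Variable I : nat -> nat -> R.
Variable Minv : forall n, 'M[R]_n.
Hypothesis hinvl : forall n, (0 < n)%N -> Minv n *m Mmat I n = 1%:M.
Hypothesis hinvr : forall n, (0 < n)%N -> Mmat I n *m Minv n = 1%:M.

Lemma coef_p n i : (0 < n)%N -> (p_poly I Minv n)`_i =
  (i == n)%:R - \sum_(k < n) (prow I n *m Minv n) 0 k * (i == (n.-1 - k)%N)%:R.
Proof.
case: n => // n _; rewrite /p_poly coefB coefXn coef_sum.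
by congr (_ - _); apply: eq_bigr => k _; rewrite coefCM coefXn.
Qed.

Lemma coef_q n j : (0 < n)%N -> (q_poly I Minv n)`_j =
  (j == n)%:R - \sum_(k < n) (j == k :> nat)%:R * (Minv n *m qcol I n) k 0.
Proof.
case: n => // n _; rewrite /q_poly coefB coefXn coef_sum.
by congr (_ - _); apply: eq_bigr => k _; rewrite coefMC coefXn.
Qed.

Lemma size_p n : (size (p_poly I Minv n) <= n.+1)%N.
Proof.
case: n => [|n]; first by rewrite /p_poly size_poly1.
apply/leq_sizeP => j hj; rewrite coef_p //.
have -> : (j == n.+1) = false by apply/negbTE; rewrite neq_ltn hj orbT.
rewrite big1 ?subr0 // => k _.
have -> : (j == (n.+1.-1 - k)%N) = false.
  apply/negbTE; rewrite neq_ltn; apply/orP; right.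
  apply: leq_ltn_trans hj; exact: leq_trans (leq_subr _ _) (leqnSn _).
by rewrite [false%:R]mulr0n mulr0.
Qed.

Lemma size_q n : (size (q_poly I Minv n) <= n.+1)%N.
Proof.
case: n => [|n]; first by rewrite /q_poly size_poly1.
apply/leq_sizeP => j hj; rewrite coef_q //.
have -> : (j == n.+1) = false by apply/negbTE; rewrite neq_ltn hj orbT.
rewrite big1 ?subr0 // => k _.
have -> : (j == k :> nat) = false.
  apply/negbTE; rewrite neq_ltn; apply/orP; right.
  exact: leq_trans (ltn_ord k) (ltnW hj).
by rewrite mulr0n mul0r.
Qed.

Lemma ltn_aux n k : (0 < n)%N -> (n.-1 - k < n)%N.
Proof. by case: n => // n _; rewrite ltnS leq_subr. Qed.

Lemma p_orth n j : (0 < n)%N -> (j < n)%N ->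
  \sum_(i < n.+1) (p_poly I Minv n)`_i * I i j = 0.
Proof.
move=> n0 jn.
under eq_bigr => i _ do rewrite coef_p // mulrBl mulr_suml.
rewrite sumrB (@sum_deltal R (fun i => I i j) n.+1 n (ltnSn n)) exchange_big /=.
rewrite [X in _ - X](_ : _ = \sum_(k < n) (prow I n *m Minv n) 0 k * I (n.-1 - k)%N j); last first.
  apply: eq_bigr => k _.
  rewrite -(@sum_deltal R (fun i => I i j) n.+1 (n.-1 - k)%N); last exact: ltn_trans (ltn_aux _ k n0) (ltnSn n).
  by rewrite mulr_sumr; apply: eq_bigr => i _; rewrite mulrA.
have e : \sum_(k < n) (prow I n *m Minv n) 0 k * I (n.-1 - k)%N j = I n j.
  transitivity (((prow I n *m Minv n) *m Mmat I n) 0 (Ordinal jn)).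
    by rewrite [RHS]mxE; apply: eq_bigr => k _; rewrite [Mmat I n _ _]mxE.
  by rewrite -mulmxA hinvl // mulmx1 mxE.
by rewrite e subrr.
Qed.

Lemma q_orth m i : (0 < m)%N -> (i < m)%N ->
  \sum_(j < m.+1) I i j * (q_poly I Minv m)`_j = 0.
Proof.
move=> m0 im.
under eq_bigr => j _ do rewrite coef_q // mulrBr mulr_sumr.
rewrite sumrB (@sum_deltar R (fun j => I i j) m.+1 m (ltnSn m)) exchange_big /=.
rewrite [X in _ - X](_ : _ = \sum_(k < m) I i k * (Minv m *m qcol I m) k 0); last first.
  apply: eq_bigr => k _.
  rewrite -(@sum_deltar R (fun j => I i j) m.+1 k); last exact: ltn_trans (ltn_ord k) (ltnSn m).
  by rewrite mulr_suml; apply: eq_bigr => j _; rewrite mulrA.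
have hr := ltn_aux _ i m0.
have hi : (m.-1 - (m.-1 - i) = i)%N by rewrite subKn //; case: m m0 im {hr}.
have e : \sum_(k < m) I i k * (Minv m *m qcol I m) k 0 = I i m.
  transitivity ((Mmat I m *m (Minv m *m qcol I m)) (Ordinal hr) 0).
    by rewrite [RHS]mxE; apply: eq_bigr => k _; rewrite [Mmat I m _ _]mxE /= hi.
  by rewrite mulmxA hinvr // mul1mx mxE /= hi.
by rewrite e subrr.
Qed.

End Main.

Theorem mainTheorem1 (R : unitRingType)
  (divR : forall x : R, x != 0 -> x \is a GRing.unit)
  (I : nat -> nat -> R) (Minv : forall n, 'M[R]_n)
  (hinvl : forall n, (0 < n)%N -> Minv n *m Mmat I n = 1%:M)
  (hinvr : forall n, (0 < n)%N -> Mmat I n *m Minv n = 1%:M) :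
  forall n m : nat, n <> m ->
    bipair I (p_poly I Minv n) (q_poly I Minv m) = 0.
Proof.
move=> n m nm.
rewrite (bipair_bound _ I _ _ _ _ (size_p _ I Minv n) (size_q _ I Minv m)).
have [mn|nm'] := ltnP m n.
  rewrite exchange_big /= big1 // => j _.
  rewrite -mulr_suml p_orth ?mul0r //; first by apply: leq_ltn_trans mn.
  by apply: leq_ltn_trans mn; rewrite -ltnS.
have nm2 : (n < m)%N by rewrite ltn_neqAle nm' andbT; apply/eqP.
rewrite big1 // => i _.
under eq_bigr => j _ do rewrite -mulrA.
rewrite -mulr_sumr q_orth ?mulr0 //; first by apply: leq_ltn_trans nm2.
by apply: leq_ltn_trans nm2; rewrite -ltnS.
Qed.
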